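(* Let $(x,y)$ be an $\mathbf{x}$-vertex of $R$. Then $y$ lies on an edge $\operatorname{conv}(y^1,y^2)$ of $Q_B$ (with $y^1,y^2$ vertices of $Q_B$). Moreover, if $x^1$ is a vertex of $P_A$ adjacent to $x$ and the step from $x$ to $x^1$ fails to lift to $R$, then the vertex at which this step terminates is of the form $(x',y^i)$ for some $x'\in\operatorname{conv}(x,x^1)$ and some $i\in\{1,2\}$.
   Context: Let $A\in\mathbb{R}^{m_1\times n_1}$, nonzero $a\in\mathbb{R}^{1\times n_1}$, nonzero $b\in\mathbb{R}^{1\times n_2}$, $B\in\mathbb{R}^{m_2\times n_2}$, $c_A\in\mathbb{R}^{m_1}$, $c_B\in\mathbb{R}^{m_2}$, $c_a,c_b\in\mathbb{R}$, and $R=\{(x,y)\in\mathbb{R}^{n_1}\times\mathbb{R}^{n_2}: Ax=c_A,\ ax+by=c_a+c_b,\ By=c_B,\ x,y\ge 0\}$. Assume $R$ is simple (nondegenerate). Let $P_A=\{x: Ax=c_A, x\ge 0\}$ and $Q_B=\{y: By=c_B, y\ge 0\}$. A vertex $(x,y)$ of $R$ is an $\mathbf{x}$-vertex if $x$ is a vertex of $P_A$. For an $\mathbf{x}$-vertex $(x,y)$ and a vertex $x^1$ of $P_A$ adjacent to $x$, the step from $x$ to $x^1$ lifts to $R$ if there exists $y'$ with $(x^1,y')\in R$ and $\operatorname{supp}(y')=\operatorname{supp}(y)$, and otherwise fails to lift. Lifting the step means moving from $(x,y)$ along the edge of $R$ given by $\{(u,v)\in R: \operatorname{supp}(u)\subseteq\operatorname{supp}(x)\cup\operatorname{supp}(x^1),\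 \operatorname{supp}(v)\subseteq\operatorname{supp}(y)\}$ (with $u$ moving along the segment from $x$ toward $x^1$); the step terminates at the endpoint of this edge other than $(x,y)$. *)

(* Defs.v *)
From HB Require Import structures.
From mathcomp Require Import all_boot all_order all_algebra.
Set Implicit Arguments. Unset Strict Implicit. Unset Printing Implicit Defensive.
Import Order.TTheory GRing.Theory Num.Theory.
Local Open Scope ring_scope.

Section Defs.
Variable R : realFieldType.

Definition nonneg n (x : 'cV[R]_n) : Prop := forall i, 0 <= x i 0.

Definition supp n (x : 'cV[R]_n) : {set 'I_n} := [set i | x i 0 != 0].

Definition polyh m n (M : 'M[R]_(m, n)) (c : 'cV[R]_m) (x : 'cV[R]_n) : Prop :=
  M *m x = c /\ nonneg x.

Definition bounded n (S : 'cV[R]_n -> Prop) : Prop :=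
  exists K : R, forall x, S x -> forall i, `|x i 0| <= K.

Definition seg n (u v : 'cV[R]_n) (z : 'cV[R]_n) : Prop :=
  exists t : R, 0 <= t <= 1 /\ z = t *: u + (1 - t) *: v.

Definition vertex n (S : 'cV[R]_n -> Prop) (z : 'cV[R]_n) : Prop :=
  S z /\ forall u v (t : R), S u -> S v -> 0 < t < 1 ->
    z = t *: u + (1 - t) *: v -> u = z /\ v = z.

Definition is_edge n (S : 'cV[R]_n -> Prop) (u v : 'cV[R]_n) : Prop :=
  u != v /\ vertex S u /\ vertex S v /\
  forall p q (t : R), S p -> S q -> 0 < t < 1 ->
    seg u v (t *: p + (1 - t) *: q) -> seg u v p /\ seg u v q.

Definition Rset m1 n1 m2 n2 (A : 'M[R]_(m1, n1)) (a : 'rV[R]_n1)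
  (b : 'rV[R]_n2) (B : 'M[R]_(m2, n2)) (cA : 'cV[R]_m1) (cB : 'cV[R]_m2)
  (ca cb : R) (x : 'cV[R]_n1) (y : 'cV[R]_n2) : Prop :=
  A *m x = cA /\ a *m x + b *m y = (ca + cb)%:M /\ B *m y = cB /\
  nonneg x /\ nonneg y.

Definition vertex2 n1 n2 (S : 'cV[R]_n1 -> 'cV[R]_n2 -> Prop)
  (x : 'cV[R]_n1) (y : 'cV[R]_n2) : Prop :=
  S x y /\ forall x1 y1 x2 y2 (t : R), S x1 y1 -> S x2 y2 -> 0 < t < 1 ->
    x = t *: x1 + (1 - t) *: x2 -> y = t *: y1 + (1 - t) *: y2 ->
    [/\ x1 = x, y1 = y, x2 = x & y2 = y].

(* R is simple (R_nondegenerate): every vertex has exactly m1 + m2 + 1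
   nonzero coordinates (one per equality constraint). *)
Definition R_nondegenerate (m1 m2 : nat) n1 n2 (S : 'cV[R]_n1 -> 'cV[R]_n2 -> Prop) : Prop :=
  forall x y, vertex2 S x y -> (#|supp x| + #|supp y|)%N = (m1 + m2 + 1)%N.

Definition lifts n1 n2 (S : 'cV[R]_n1 -> 'cV[R]_n2 -> Prop)
  (x1 : 'cV[R]_n1) (y : 'cV[R]_n2) : Prop :=
  exists y', S x1 y' /\ supp y' = supp y.

(* the edge of R along which the step is lifted *)
Definition step_edge n1 n2 (S : 'cV[R]_n1 -> 'cV[R]_n2 -> Prop)
  (x x1 : 'cV[R]_n1) (y : 'cV[R]_n2) (u : 'cV[R]_n1) (v : 'cV[R]_n2) : Prop :=
  S u v /\ supp u \subset supp x :|: supp x1 /\ supp v \subset supp y.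

Definition step_end n1 n2 (S : 'cV[R]_n1 -> 'cV[R]_n2 -> Prop)
  (x x1 : 'cV[R]_n1) (y : 'cV[R]_n2) (u : 'cV[R]_n1) (v : 'cV[R]_n2) : Prop :=
  vertex2 (step_edge S x x1 y) u v /\ (u, v) <> (x, y).

End Defs.

(* Main.v *)
Require Import Defs.
From HB Require Import structures.
From mathcomp Require Import all_boot all_order all_algebra.
From mathcomp Require Import ring lra zify.
Import Order.TTheory GRing.Theory Num.Theory.
Set Implicit Arguments. Unset Strict Implicit. Unset Printing Implicit Defensive.
Local Open Scope ring_scope.
Section H.
Variable F : realFieldType.

Lemma suppS n (x y : 'cV[F]_n) :
  (forall i, x i 0 != 0 -> y i 0 != 0) -> supp x \subset supp y.
Proof. by move=> h; apply/subsetP => i; rewrite !inE; apply: h. Qed.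

Lemma suppE n (x : 'cV[F]_n) i : (i \in supp x) = (x i 0 != 0).
Proof. by rewrite inE. Qed.

Lemma supp_sub0 n (x : 'cV[F]_n) (S : {set 'I_n}) i :
  supp x \subset S -> i \notin S -> x i 0 = 0.
Proof.
move=> /subsetP h hi; apply/eqP; apply: contraNT hi => hx.
by apply: h; rewrite inE.
Qed.

Lemma nonneg_comb n (p q : 'cV[F]_n) s : nonneg p -> nonneg q -> 0 <= s <= 1 ->
  nonneg (s *: p + (1 - s) *: q).
Proof.
move=> hp hq /andP[s0 s1] i; rewrite !mxE.
by apply: addr_ge0; apply: mulr_ge0 => //; rewrite subr_ge0.
Qed.

Lemma comb_zero n (p q : 'cV[F]_n) s i : nonneg p -> nonneg q -> 0 < s < 1 ->
  (s *: p + (1 - s) *: q) i 0 = 0 -> p i 0 = 0 /\ q i 0 = 0.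
Proof.
move=> hp hq /andP[s0 s1]; rewrite !mxE => h.
have h1 := hp i; have h2 := hq i.
split; nra.
Qed.

Lemma supp_comb_sub n (p q : 'cV[F]_n) s : nonneg p -> nonneg q -> 0 < s < 1 ->
  supp p \subset supp (s *: p + (1 - s) *: q) /\
  supp q \subset supp (s *: p + (1 - s) *: q).
Proof.
move=> hp hq hs; split; apply: suppS => i; apply: contra_neq => h;
 by have [] := comb_zero hp hq hs h.
Qed.

Lemma supp_lin n (p q : 'cV[F]_n) s t :
  supp (s *: p + t *: q) \subset supp p :|: supp q.
Proof.
apply/subsetP => i; rewrite !inE !mxE; apply: contraR.
by rewrite negb_or !negbK => /andP[/eqP -> /eqP ->]; rewrite !mulr0 addr0.
Qed.

Lemma supp_add n (p q : 'cV[F]_n) (S : {set 'I_n}) :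
  supp p \subset S -> supp q \subset S -> supp (p + q) \subset S.
Proof.
move=> /subsetP hp /subsetP hq; apply/subsetP => i; rewrite inE mxE => h.
have [/eqP p0|pn] := boolP (p i 0 == 0).
  by apply: hq; rewrite inE; move: h; rewrite p0 add0r.
by apply: hp; rewrite inE.
Qed.

Lemma supp_scale n (p : 'cV[F]_n) s : supp (s *: p) \subset supp p.
Proof. by apply: suppS => i; rewrite mxE; apply: contra_neq => ->; rewrite mulr0. Qed.

Lemma supp_opp n (p : 'cV[F]_n) : supp (- p) = supp p.
Proof. by apply/setP => i; rewrite !inE mxE oppr_eq0. Qed.

Lemma pert n (z e : 'cV[F]_n) : nonneg z -> supp e \subset supp z ->
  exists2 eps : F, 0 < eps & forall t, `|t| <= eps -> nonneg (z + t *: e).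
Proof.
move=> hz hs.
pose S := \sum_i `|e i 0| / z i 0.
have S0 : 0 <= S by apply: sumr_ge0 => i _; apply: divr_ge0 => //; exact: hz.
have S1 : 0 < 1 + S by lra.
exists (1 + S)^-1; first by rewrite invr_gt0.
move=> t ht i; rewrite !mxE.
have [zi0|zi0] := eqVneq (z i 0) 0.
  have -> : e i 0 = 0 by apply: (supp_sub0 hs); rewrite inE zi0 eqxx.
  by rewrite zi0 mulr0 addr0.
have zpos : 0 < z i 0 by rewrite lt_def zi0 hz.
have hi : `|e i 0| / z i 0 <= S.
  rewrite /S (bigD1 i) //= lerDl; apply: sumr_ge0 => j _.
  by apply: divr_ge0 => //; exact: hz.
have he : `|e i 0| <= S * z i 0 by rewrite -ler_pdivrMr.
have hn := normr_ge0 (e i 0).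
have ht0 := normr_ge0 t.
have hinv : (1 + S)^-1 * (1 + S) = 1 by rewrite mulVf // gt_eqF.
have hinv0 : 0 < (1 + S)^-1 by rewrite invr_gt0.
have key : `|t| * `|e i 0| <= z i 0 by nra.
have := ler_norm (- (t * e i 0)); rewrite normrN normrM.
lra.
Qed.


Lemma half_bounds : 0 < (2^-1 : F) < 1.
Proof. by rewrite invr_gt0 ltr0n /= invf_lt1 ?ltr0n // ltr1n. Qed.

Lemma half_eq n (z e : 'cV[F]_n) : z = 2^-1 *: (z + e) + (1 - 2^-1) *: (z - e).
Proof.
apply/matrixP => i j; rewrite !mxE.
have h2 : (2 : F) != 0 by rewrite pnatr_eq0.
by field.
Qed.

Lemma add_eq_l n (z e : 'cV[F]_n) : z + e = z -> e = 0.
Proof. by move/(congr1 (fun v => v - z)); rewrite addrAC subrr add0r. Qed.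

Lemma vertex_dir n (S : 'cV[F]_n -> Prop) z e :
  vertex S z -> S (z + e) -> S (z - e) -> e = 0.
Proof.
move=> [_ hv] h1 h2.
have [h _] := hv _ _ _ h1 h2 half_bounds (half_eq z e).
exact: add_eq_l h.
Qed.

Lemma vertex2_dir n1 n2 (S : 'cV[F]_n1 -> 'cV[F]_n2 -> Prop) x y ex ey :
  vertex2 S x y -> S (x + ex) (y + ey) -> S (x - ex) (y - ey) -> ex = 0 /\ ey = 0.
Proof.
move=> [_ hv] h1 h2.
have [h h' _ _] := hv _ _ _ _ _ h1 h2 half_bounds (half_eq x ex) (half_eq y ey).
by split; [exact: add_eq_l h | exact: add_eq_l h'].
Qed.

Lemma lin_add m n (M : 'M[F]_(m, n)) (z d : 'cV[F]_n) t : M *m (z + t *: d) = M *m z + t *: (M *m d).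
Proof. by rewrite mulmxDr scalemxAr. Qed.

Lemma subE n (z d : 'cV[F]_n) t : z - t *: d = z + (- t) *: d.
Proof. by rewrite scaleNr. Qed.

Lemma vertex_ker m n (M : 'M[F]_(m, n)) c z d :
  vertex (polyh M c) z -> supp d \subset supp z -> M *m d = 0 -> d = 0.
Proof.
move=> hv hs hM.
have hz : nonneg z by case: hv => -[].
have hMz : M *m z = c by case: hv => -[].
have [eps eps0 hp] := pert hz hs.
have : eps *: d = 0.
  apply: (vertex_dir hv); split.
  - by rewrite lin_add hM scaler0 addr0.
  - by apply: hp; rewrite gtr0_norm.
  - by rewrite subE lin_add hM scaler0 addr0.
  - by rewrite subE; apply: hp; rewrite normrN gtr0_norm.
by move/eqP; rewrite scaler_eq0 gt_eqF //= => /eqP.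
Qed.

Lemma vertex2_ker m1 n1 m2 n2 (A : 'M[F]_(m1, n1)) (a : 'rV[F]_n1)
  (b : 'rV[F]_n2) (B : 'M[F]_(m2, n2)) cA cB ca cb x y dx dy :
  vertex2 (Rset A a b B cA cB ca cb) x y ->
  supp dx \subset supp x -> supp dy \subset supp y ->
  A *m dx = 0 -> B *m dy = 0 -> a *m dx + b *m dy = 0 -> dx = 0 /\ dy = 0.
Proof.
move=> hv hsx hsy hA hB hab.
have [hAx [hab0 [hBy [hx hy]]]] := hv.1.
have [e1 e10 hp1] := pert hx hsx.
have [e2 e20 hp2] := pert hy hsy.
pose eps := Order.min e1 e2.
have eps0 : 0 < eps by rewrite lt_min e10 e20.
have he1 : `|eps| <= e1 by rewrite gtr0_norm // ge_min lexx.
have he2 : `|eps| <= e2 by rewrite gtr0_norm // ge_min lexx orbT.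
have : eps *: dx = 0 /\ eps *: dy = 0.
  apply: (vertex2_dir hv); rewrite ?subE; repeat split; rewrite ?lin_add;
  try (by rewrite hA scaler0 addr0); try (by rewrite hB scaler0 addr0);
  try (by rewrite addrACA -scalerDr hab scaler0 addr0);
  try (by apply: hp1; rewrite ?normrN); try (by apply: hp2; rewrite ?normrN).
case=> /eqP h1 /eqP h2; move: h1 h2.
by rewrite !scaler_eq0 gt_eqF //= => /eqP -> /eqP ->.
Qed.

Lemma nz_coord n (e : 'cV[F]_n) : e != 0 -> exists i, e i 0 != 0.
Proof.
move=> hne; case: (pickP (fun i => e i 0 != 0)) => [i hi|h]; first by exists i.
case/eqP: hne; apply/matrixP => i j; rewrite (ord1 j) mxE.
by move: (h i) => /= /negbFE /eqP.
Qed.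

Lemma mx11_eq0 (M : 'M[F]_1) : M 0 0 = 0 -> M = 0.
Proof. by move=> h; apply/matrixP => i j; rewrite (ord1 i) (ord1 j) h mxE. Qed.

Lemma mx11_lin (M N : 'M[F]_1) g h : (g *: M + h *: N) 0 0 = g * M 0 0 + h * N 0 0.
Proof. by rewrite !mxE. Qed.

Lemma mx11_sub (M N : 'M[F]_1) g : (M - g *: N) 0 0 = M 0 0 - g * N 0 0.
Proof. by rewrite !mxE. Qed.

Lemma mx11_scale (M : 'M[F]_1) g : (g *: M) 0 0 = g * M 0 0.
Proof. by rewrite !mxE. Qed.

Lemma supp0 n : supp (0 : 'cV[F]_n) = set0.
Proof. by apply/setP => i; rewrite !inE mxE eqxx. Qed.

Lemma polyh_comb m n (M : 'M[F]_(m, n)) c p q s :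
  polyh M c p -> polyh M c q -> 0 <= s <= 1 -> polyh M c (s *: p + (1 - s) *: q).
Proof.
move=> [hp np] [hq nq] hs; split; last exact: nonneg_comb.
by rewrite mulmxDr -!scalemxAr hp hq -scalerDl addrC subrK scale1r.
Qed.

Lemma bounded_dir m n (M : 'M[F]_(m, n)) c z (e : 'cV[F]_n) :
  bounded (polyh M c) -> polyh M c z -> M *m e = 0 -> e != 0 ->
  exists j, e j 0 < 0.
Proof.
move=> [K hK] [hMz hz] hMe hne.
case: (pickP (fun j => e j 0 < 0)) => [j hj|h]; first by exists j.
exfalso.
have hge : forall j, 0 <= e j 0 by move=> j; rewrite leNgt; move: (h j) => /= ->.
have [i hi] := nz_coord hne.
have ei : 0 < e i 0 by rewrite lt_def hi hge.
pose t := (`|K| + `|z i 0| + 1) / e i 0.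
have ht : 0 <= t by apply: divr_ge0 => //; rewrite -addrA; apply: addr_ge0 => //; apply: addr_ge0.
have hp : polyh M c (z + t *: e).
  split; first by rewrite lin_add hMe scaler0 addr0.
  by move=> j; rewrite !mxE; apply: addr_ge0 => //; apply: mulr_ge0.
have := hK _ hp i; rewrite !mxE /t divfK ?gt_eqF //.
have h1 := ler_norm K; have h2 := ler_norm (- z i 0); rewrite normrN in h2.
have h3 := ler_norm (z i 0 + (`|K| + `|z i 0| + 1)).
lra.
Qed.

Lemma endpoint n (y e : 'cV[F]_n) : nonneg y -> supp e \subset supp y ->
  (exists j, e j 0 < 0) ->
  exists t j, [/\ 0 < t, e j 0 < 0, (y + t *: e) j 0 = 0 & nonneg (y + t *: e)].
Proof.
move=> hy hs [j0 hj0].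
pose G := fun j => y j 0 / (- e j 0).
case: (arg_minP (P := fun j => e j 0 < 0) G hj0) => j hj hmin.
have ej : e j 0 != 0 by rewrite lt_eqF.
have yj : 0 < y j 0.
  rewrite lt_def hy andbT; move/subsetP: hs => /(_ j); rewrite !inE; exact.
have ej' : 0 < - e j 0 by rewrite oppr_gt0.
exists (G j), j; split => //.
- by apply: divr_gt0.
- by rewrite !mxE /G; field.
- move=> i; rewrite !mxE.
  have [ei|ei] := leP 0 (e i 0).
    by apply: addr_ge0 => //; apply: mulr_ge0 => //; apply: divr_ge0 => //; apply: ltW.
  have := hmin i ei; rewrite /G /= => hle.
  have ei' : 0 < - e i 0 by rewrite oppr_gt0.
  move: hle; rewrite ler_pdivlMr // => hle.
  lra.
Qed.

Lemma edge_face m n (M : 'M[F]_(m, n)) c x x1 u :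
  is_edge (polyh M c) x x1 -> polyh M c u ->
  supp u \subset supp x :|: supp x1 -> seg x x1 u.
Proof.
move=> [_ [[hPx _] [[hPx1 _] hface]]] hPu hsu.
have hb := half_bounds.
pose mid := 2^-1 *: x + (1 - 2^-1) *: x1.
have [sxm sx1m] := supp_comb_sub hPx.2 hPx1.2 hb.
have hsm : supp x :|: supp x1 \subset supp mid by rewrite subUset sxm sx1m.
have hPm : polyh M c mid by apply: polyh_comb => //; case/andP: hb => h1 h2; rewrite ltW // ltW.
pose e := mid - u.
have hse : supp e \subset supp mid.
  by apply: supp_add => //; rewrite supp_opp; apply: subset_trans hsu hsm.
have [eps eps0 hp] := pert hPm.2 hse.
pose w := mid + eps *: e.
have hPw : polyh M c w.
  split; last by apply: hp; rewrite gtr0_norm.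
  by rewrite lin_add mulmxBr hPm.1 hPu.1 subrr scaler0 addr0.
pose s := (1 + eps)^-1.
have hs : 0 < s < 1.
  have h1e : 0 < 1 + eps by lra.
  by rewrite invr_gt0 h1e invf_lt1 // ltrDl eps0.
have he : mid = s *: w + (1 - s) *: u.
  apply/matrixP => i j; rewrite /w /e /s !mxE.
  have : 1 + eps != 0 by rewrite gt_eqF // addr_gt0.
  by move=> h; field.
have hsegm : seg x x1 (s *: w + (1 - s) *: u).
  rewrite -he; exists 2^-1; split => //.
  by case/andP: hb => h1 h2; rewrite ltW // ltW.
by have [_ ?] := hface _ _ _ hPw hPu hs hsegm.
Qed.

Lemma kernel_supp m n (M : 'M[F]_(m, n)) (S : {set 'I_n}) :
  (m < #|S|)%N -> exists d : 'cV[F]_n, [/\ d != 0, M *m d = 0 & supp d \subset S].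
Proof.
move=> hm.
pose E : 'M[F]_(#|S|, n) := \matrix_(i, j) ((j == enum_val i)%:R).
pose N := E *m M^T.
have hrk : (\rank N < #|S|)%N by apply: leq_ltn_trans (rank_leq_col N) hm.
have Kn0 : kermx N != 0.
  apply/eqP => K0; move: (mxrank_ker N); rewrite K0 mxrank0 => /esym/eqP.
  by rewrite subn_eq0 leqNgt hrk.
have [i0 ui0] : exists i, row i (kermx N) != 0.
  case: (pickP (fun i => row i (kermx N) != 0)) => [i hi|h]; first by exists i.
  case/eqP: Kn0; apply/row_matrixP => i; rewrite row0; apply/eqP.
  by move: (h i) => /negbFE.
pose u := row i0 (kermx N).
have uN : u *m N = 0 by rewrite /u -row_mul mulmx_ker row0.
have [j0 uj0] : exists j, u 0 j != 0.
  case: (pickP (fun j => u 0 j != 0)) => [j hj|h]; first by exists j.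
  case/eqP: ui0; apply/matrixP => a b; rewrite (ord1 a) mxE.
  by move: (h b) => /= /negbFE /eqP; rewrite /u !mxE.
clearbody u.
exists ((u *m E)^T); split.
- apply/negP => /eqP hE.
  have : (u *m E)^T (enum_val j0) 0 = u 0 j0.
    rewrite !mxE (bigD1 j0) //= /E !mxE eqxx mulr1 big1 ?addr0 // => j hj.
    by rewrite mxE (inj_eq enum_val_inj) eq_sym (negbTE hj) mulr0.
  by rewrite hE => e; move: uj0; rewrite -e mxE eqxx.
- rewrite trmx_mul mulmxA -{1}(trmxK M) -trmx_mul -trmx_mul.
  by rewrite uN trmx0.
- apply/subsetP => j; rewrite inE !mxE; apply: contraR => hj.
  rewrite big1 // => i _; rewrite mxE.
  have -> : (j == enum_val i) = false.
    by apply/negbTE; apply: contraNneq hj => ->; exact: enum_valP.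
  by rewrite mulr0.
Qed.

Lemma entry_sub m n (M N : 'M[F]_(m, n)) i j : (M - N) i j = M i j - N i j.
Proof. by rewrite !mxE. Qed.
Lemma entry_scale m n (M : 'M[F]_(m, n)) g i j : (g *: M) i j = g * M i j.
Proof. by rewrite !mxE. Qed.
Lemma entry_add m n (M N : 'M[F]_(m, n)) i j : (M + N) i j = M i j + N i j.
Proof. by rewrite !mxE. Qed.

End H.

Theorem lemma2 (F : realFieldType) (m1 n1 m2 n2 : nat)
  (A : 'M[F]_(m1, n1)) (a : 'rV[F]_n1) (b : 'rV[F]_n2) (B : 'M[F]_(m2, n2))
  (cA : 'cV[F]_m1) (cB : 'cV[F]_m2) (ca cb : F) :
  a != 0 -> b != 0 ->
  bounded (polyh A cA) -> bounded (polyh B cB) ->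
  R_nondegenerate m1 m2 (Rset A a b B cA cB ca cb) ->
  forall (x : 'cV[F]_n1) (y : 'cV[F]_n2),
    vertex2 (Rset A a b B cA cB ca cb) x y -> vertex (polyh A cA) x ->
    exists y1 y2 : 'cV[F]_n2,
      is_edge (polyh B cB) y1 y2 /\ seg y1 y2 y /\
      forall x1 : 'cV[F]_n1,
        is_edge (polyh A cA) x x1 ->
        ~ lifts (Rset A a b B cA cB ca cb) x1 y ->
        forall u v, step_end (Rset A a b B cA cB ca cb) x x1 y u v ->
          exists x', seg x x1 x' /\ u = x' /\ (v = y1 \/ v = y2).
Proof.
move=> an0 bn0 bndA bndB nondeg x y hv hxv.
have [hAx [habxy [hBy [hx hy]]]] := hv.1.
have hsx : (#|supp x| <= m1)%N.
  rewrite leqNgt; apply/negP => hlt.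
  have [d [dn0 Ad sd]] := kernel_supp A hlt.
  by move/eqP: dn0; apply; apply: (vertex_ker hxv sd Ad).
have hsy : (m2 < #|supp y|)%N.
  by have := nondeg _ _ hv; lia.
have [d [dn0 Bd sd]] := kernel_supp B hsy.
have s0x : supp (0 : 'cV[F]_n1) \subset supp x by rewrite supp0 sub0set.
have UQ : forall w, B *m w = 0 -> supp w \subset supp y -> b *m w = 0 -> w = 0.
  move=> w Bw sw bw.
  have hab0 : a *m 0 + b *m w = 0 by rewrite mulmx0 add0r.
  have hA0 : A *m (0 : 'cV[F]_n1) = 0 by rewrite mulmx0.
  by have [] := vertex2_ker hv s0x sw hA0 Bw hab0.
have bd0 : (b *m d) 0 0 != 0.
  by apply/eqP => h0; case/eqP: dn0; apply: UQ => //; exact: mx11_eq0.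
have UQe : forall w, B *m w = 0 -> supp w \subset supp y -> exists g, w = g *: d.
  move=> w Bw sw; exists ((b *m w) 0 0 / (b *m d) 0 0).
  apply/eqP; rewrite -subr_eq0; apply/eqP; apply: UQ.
  - by rewrite mulmxBr -scalemxAr Bd scaler0 subr0.
  - apply: supp_add => //; rewrite supp_opp; exact: subset_trans (supp_scale _ _) sd.
  - by apply: mx11_eq0; rewrite mulmxBr -scalemxAr mx11_sub; field.
have hQy : polyh B cB y by [].
have [j1 hj1] := bounded_dir bndB hQy Bd dn0.
have Bnd : B *m (- d) = 0 by rewrite mulmxN Bd oppr0.
have nd0 : - d != 0 by rewrite oppr_eq0.
have [j2 hj2] := bounded_dir bndB hQy Bnd nd0.
have snd : supp (- d) \subset supp y by rewrite supp_opp.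
have [t1 [k1 [t10 hk1 y1k0 y1nn]]] := endpoint hy sd (ex_intro _ j1 hj1).
have [t2 [k2 [t20 hk2 y2k0 y2nn]]] := endpoint hy snd (ex_intro _ j2 hj2).
have y1k := y1k0; have y2k := y2k0.
rewrite !mxE in y1k y2k hk2.
pose y1 := y + t1 *: d.
pose y2 := y + t2 *: - d.
have hQy1 : polyh B cB y1 by split => //; rewrite /y1 lin_add Bd scaler0 addr0.
have hQy2 : polyh B cB y2 by split => //; rewrite /y2 lin_add Bnd scaler0 addr0.
have sy1 : supp y1 \subset supp y.
  by apply: supp_add => //; exact: subset_trans (supp_scale _ _) sd.
have sy2 : supp y2 \subset supp y.
  by apply: supp_add => //; exact: subset_trans (supp_scale _ _) snd.
have EU : forall (e : 'cV[F]_n2) t k, e k 0 != 0 -> B *m e = 0 -> supp e \subset supp y ->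
    (forall w, B *m w = 0 -> supp w \subset supp y -> exists g, w = g *: e) ->
    (y + t *: e) k 0 = 0 ->
    forall p, polyh B cB p -> supp p \subset supp y -> p k 0 = 0 -> p = y + t *: e.
  move=> e t k ek Be se UQ0 yk p [Bp np] sp pk.
  have Bw : B *m (p - (y + t *: e)) = 0 by rewrite mulmxBr Bp lin_add Be scaler0 addr0 hBy subrr.
  have sw : supp (p - (y + t *: e)) \subset supp y.
    apply: supp_add => //; rewrite supp_opp; apply: supp_add => //; exact: subset_trans (supp_scale _ _) se.
  have [g hw] := UQ0 _ Bw sw.
  have : g * e k 0 = 0.
    by move: (congr1 (fun M : 'cV[F]_n2 => M k 0) hw); rewrite /= entry_sub entry_scale yk pk subrr => <-.
  move/eqP; rewrite mulf_eq0 (negbTE ek) orbF => /eqP g0.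
  by move: hw; rewrite g0 scale0r => /subr0_eq.
have EU1 : forall p, polyh B cB p -> supp p \subset supp y -> p k1 0 = 0 -> p = y1.
  by apply: (EU d t1 k1) => //; rewrite lt_eqF.
have EU2 : forall p, polyh B cB p -> supp p \subset supp y -> p k2 0 = 0 -> p = y2.
  apply: (EU (- d) t2 k2) => //.
  - by rewrite mxE lt_eqF.
  - move=> w Bw sw; have [g ->] := UQe w Bw sw; exists (- g).
    by rewrite scaleNr scalerN opprK.
have SEG : forall p, polyh B cB p -> supp p \subset supp y -> seg y1 y2 p.
  move=> p [Bp np] sp.
  have Bw : B *m (p - y) = 0 by rewrite mulmxBr Bp hBy subrr.
  have sw : supp (p - y) \subset supp y by apply: supp_add => //; rewrite supp_opp.
  have [g hw] := UQe _ Bw sw.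
  have hp : p = y + g *: d by rewrite -hw addrC subrK.
  have hpk1 := np k1; have hpk2 := np k2; rewrite hp !mxE in hpk1 hpk2.
  have g1 : g <= t1 by nra.
  have g2 : - t2 <= g by nra.
  have tt : 0 < t1 + t2 by lra.
  exists ((g + t2) / (t1 + t2)); split.
    by rewrite divr_ge0 /=; [rewrite ler_pdivrMr //; lra | lra | lra].
  rewrite hp; apply/matrixP => i j; rewrite /y1 /y2 !mxE.
  have tt0 : t1 + t2 != 0 by rewrite gt_eqF.
  by field.
have hy12 : y1 != y2.
  apply/eqP => e12; have := congr1 (fun M : 'cV[F]_n2 => M k1 0) e12.
  rewrite /= /y1 /y2 !mxE => h12; clear e12.
  have h0 : (t1 + t2) * d k1 0 = 0 by lra.
  have tt : 0 < t1 + t2 by lra.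
  move: h0; apply/eqP; apply: mulf_neq0; [by rewrite gt_eqF | by rewrite lt_eqF].
have vy1 : vertex (polyh B cB) y1.
  split => // p q s hp hq hs e.
  have [sp sq] := supp_comb_sub hp.2 hq.2 hs; rewrite -e in sp sq.
  have z1 : (s *: p + (1 - s) *: q) k1 0 = 0 by rewrite -e.
  have [pk qk] := comb_zero hp.2 hq.2 hs z1.
  by split; apply: EU1 => //; exact: subset_trans sy1.
have vy2 : vertex (polyh B cB) y2.
  split => // p q s hp hq hs e.
  have [sp sq] := supp_comb_sub hp.2 hq.2 hs; rewrite -e in sp sq.
  have z1 : (s *: p + (1 - s) *: q) k2 0 = 0 by rewrite -e.
  have [pk qk] := comb_zero hp.2 hq.2 hs z1.
  by split; apply: EU2 => //; exact: subset_trans sy2.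
have face : forall p q s, polyh B cB p -> polyh B cB q -> 0 < s < 1 ->
    seg y1 y2 (s *: p + (1 - s) *: q) -> seg y1 y2 p /\ seg y1 y2 q.
  move=> p q s hp hq hs [l [_ hl]].
  have sz : supp (s *: p + (1 - s) *: q) \subset supp y.
    by rewrite hl; apply: subset_trans (supp_lin _ _ _ _) _; rewrite subUset sy1 sy2.
  have [sp sq] := supp_comb_sub hp.2 hq.2 hs.
  by split; apply: SEG => //; exact: subset_trans sz.
exists y1, y2; split; first by split.
split; first by apply: SEG.
move=> x1 hedge hnl u v [hve hne].
have [[hRuv [hsu hsv]] _] := hve.
have [hAu [habuv [hBv [hu hv']]]] := hRuv.
have hsegu := edge_face hedge (conj hAu hu) hsu.
have [s [hs01 hue]] := hsegu.
have [l [hl01 hve']] := SEG v (conj hBv hv') hsv.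
exists u; split; first exact: hsegu.
split; first by [].
have hPx : polyh A cA x := hedge.2.1.1.
have hPx1 : polyh A cA x1 := hedge.2.2.1.1.
have [l1|l1] := eqVneq l 1.
  by left; rewrite hve' l1 subrr scale0r scale1r addr0.
have [l0|l0] := eqVneq l 0.
  by right; rewrite hve' l0 subr0 scale0r scale1r add0r.
have hl : 0 < l < 1.
  by case/andP: hl01 => a1 a2; rewrite !lt_def l0 a1 a2 eq_sym l1.
exfalso.
have [s1|s1] := eqVneq s 1.
  have ux : u = x by rewrite hue s1 subrr scale0r scale1r addr0.
  apply: hne.
  have hbv : b *m v = b *m y.
    by apply: (@addrI _ (a *m x)); rewrite habxy -ux habuv.
  have Bw : B *m (v - y) = 0 by rewrite mulmxBr hBv hBy subrr.
  have sw : supp (v - y) \subset supp y by apply: supp_add => //; rewrite supp_opp.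
  have bw : b *m (v - y) = 0 by rewrite mulmxBr hbv subrr.
  have := UQ _ Bw sw bw; move/subr0_eq => ->.
  by rewrite ux.
have [s0|s0] := eqVneq s 0.
  have ux1 : u = x1 by rewrite hue s0 scale0r add0r subr0 scale1r.
  apply: hnl; exists v; split; first by rewrite -ux1.
  apply/eqP; rewrite eqEsubset hsv /=.
  have [sy1v sy2v] := supp_comb_sub hQy1.2 hQy2.2 hl; rewrite -hve' in sy1v sy2v.
  have [l' [_ hyl]] := SEG y hQy (subxx _).
  rewrite {1}hyl; apply: subset_trans (supp_lin _ _ _ _) _.
  by rewrite subUset sy1v sy2v.
have hs : 0 < s < 1.
  by case/andP: hs01 => a1 a2; rewrite !lt_def s0 a1 a2 eq_sym s1.
pose X := x - x1. pose Y := y1 - y2.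
have hY : Y = (t1 + t2) *: d by apply/matrixP => i j; rewrite /Y /y1 /y2 !mxE; ring.
have tt : 0 < t1 + t2 by lra.
have beta0 : (b *m Y) 0 0 != 0.
  by rewrite hY -scalemxAr mx11_scale mulf_neq0 // gt_eqF.
pose ga := (a *m X) 0 0 / (b *m Y) 0 0.
pose m0 := Num.min s (1 - s). pose mL := Num.min l (1 - l).
have hga : 0 < `|ga| + 1 by have := normr_ge0 ga; lra.
pose eps := Num.min m0 (mL / (`|ga| + 1)).
have ms : m0 <= s by rewrite ge_min lexx.
have ms' : m0 <= 1 - s by rewrite ge_min lexx orbT.
have ml : mL <= l by rewrite ge_min lexx.
have ml' : mL <= 1 - l by rewrite ge_min lexx orbT.
have e1 : eps <= m0 by rewrite ge_min lexx.
have e2 : eps * (`|ga| + 1) <= mL by rewrite -ler_pdivlMr // ge_min lexx orbT.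
have eps0 : 0 < eps.
  case/andP: hs => a1 a2; case/andP: hl => b1 b2.
  rewrite !lt_min a1 subr_gt0 a2 /=; apply: divr_gt0 => //.
  by rewrite lt_min b1 subr_gt0 b2.
have CL : forall dl, `|dl| <= eps ->
    step_edge (Rset A a b B cA cB ca cb) x x1 y (u + dl *: X) (v + (- (dl * ga)) *: Y).
  move=> dl hdl.
  have := hdl; rewrite ler_norml => /andP[d1 d2].
  have hn1 := normr_ge0 ga.
  have hdg : `|dl * ga| <= eps * `|ga| by rewrite normrM ler_wpM2r.
  have nn1 := ler_norm (dl * ga); have nn2 := ler_norm (- (dl * ga)); rewrite normrN in nn2.
  have hue' : u + dl *: X = (s + dl) *: x + (1 - (s + dl)) *: x1.
    by rewrite hue; apply/matrixP => i j; rewrite /X !mxE; ring.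
  have hve2 : v + (- (dl * ga)) *: Y = (l - dl * ga) *: y1 + (1 - (l - dl * ga)) *: y2.
    by rewrite hve'; apply/matrixP => i j; rewrite /Y !mxE; ring.
  have hsb : 0 <= s + dl <= 1 by apply/andP; split; lra.
  have hlb : 0 <= l - dl * ga <= 1 by apply/andP; split; lra.
  have hPu' : polyh A cA (u + dl *: X) by rewrite hue'; apply: polyh_comb.
  have hQv' : polyh B cB (v + (- (dl * ga)) *: Y) by rewrite hve2; apply: polyh_comb.
  split; last split.
  - split; first exact: hPu'.1.
    split; last by split; [exact: hQv'.1 | split; [exact: hPu'.2 | exact: hQv'.2]].
    rewrite !lin_add addrACA habuv.
    have -> : dl *: (a *m X) + (- (dl * ga)) *: (b *m Y) = 0.
      by apply: mx11_eq0; rewrite mx11_lin /ga; field.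
    by rewrite addr0.
  - by rewrite hue'; exact: supp_lin.
  - rewrite hve2; apply: subset_trans (supp_lin _ _ _ _) _.
    by rewrite subUset sy1 sy2.
have ne1 : `|eps| <= eps by rewrite gtr0_norm.
have ne2 : `|- eps| <= eps by rewrite normrN gtr0_norm.
have c1 := CL eps ne1.
have c2 := CL (- eps) ne2.
rewrite scaleNr mulNr opprK in c2.
have c2' : step_edge (Rset A a b B cA cB ca cb) x x1 y (u - eps *: X) (v - (- (eps * ga)) *: Y).
  by rewrite scaleNr opprK.
have [hX _] := vertex2_dir hve c1 c2'.
move/eqP: hX; rewrite scaler_eq0 gt_eqF //= /X subr_eq0 => hxx1.
by case: hedge => /negP hn _; apply: hn.
Qed.
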